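(* Let $Y_1,\dots,Y_J\subset\mathbb{R}^M$ be nonempty cones and let $Y=Y_1+\dots+Y_J$ (Minkowski sum). Suppose $p\in\mathbb{R}^M$ supports $Y$ at $y^*\in Y$ and $y^*=\sum_{j=1}^J y_j$ with $y_j\in Y_j$ for each $j$. Let $C$ be the smallest convex cone containing $\{y_1,\dots,y_J\}$. Then $p$ supports $Y$ at every $\bar{y}\in C$.
   Context: A set $Y\subset\mathbb{R}^M$ is a cone if $y\in Y$ and $\alpha\ge 0$ imply $\alpha y\in Y$ (not necessarily convex). A vector $p$ supports a cone $Y$ at $y^*\in Y$ if $p\cdot y^*\ge p\cdot y$ for all $y\in Y$. The Minkowski sum is $Y_1+\dots+Y_J=\{\sum_j z_j: z_j\in Y_j\}$. The smallest convex cone containing $\{y_j\}$ is $\{\sum_j\alpha_j y_j:\alpha_j\ge0\}$. *)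

(* Defs.v *)
From mathcomp Require Import all_boot all_order all_algebra.
Set Implicit Arguments. Unset Strict Implicit. Unset Printing Implicit Defensive.
Import Order.TTheory GRing.Theory Num.Theory.
Local Open Scope ring_scope.

Definition dotv (R : realFieldType) (M : nat) (p y : 'rV[R]_M) : R :=
  \sum_(i < M) p 0 i * y 0 i.

Definition is_cone (R : realFieldType) (M : nat) (Y : 'rV[R]_M -> Prop) : Prop :=
  forall (y : 'rV[R]_M) (a : R), Y y -> 0 <= a -> Y (a *: y).

Definition minkowski_sum (R : realFieldType) (M J : nat)
  (Y : 'I_J -> 'rV[R]_M -> Prop) : 'rV[R]_M -> Prop :=
  fun y => exists z : 'I_J -> 'rV[R]_M, (forall j, Y j (z j)) /\ y = \sum_(j < J) z j.

Definition supports (R : realFieldType) (M : nat) (Y : 'rV[R]_M -> Prop)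
  (p ys : 'rV[R]_M) : Prop :=
  Y ys /\ forall y, Y y -> dotv p y <= dotv p ys.

(* Smallest convex cone containing {v_1,...,v_J}: { sum_j a_j v_j : a_j >= 0 }. *)
Definition conv_cone (R : realFieldType) (M J : nat) (v : 'I_J -> 'rV[R]_M)
  : 'rV[R]_M -> Prop :=
  fun y => exists a : 'I_J -> R, (forall j, 0 <= a j) /\ y = \sum_(j < J) a j *: v j.

(* Main.v *)
Require Import Defs.
From mathcomp Require Import all_boot all_order all_algebra.
Import Order.TTheory GRing.Theory Num.Theory.
Local Open Scope ring_scope.

Lemma dotvD (R : realFieldType) (M : nat) (p u v : 'rV[R]_M) :
  dotv p (u + v) = dotv p u + dotv p v.
Proof. by rewrite /dotv -big_split /=; apply: eq_bigr => i _; rewrite mxE mulrDr. Qed.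

Lemma dotvZ (R : realFieldType) (M : nat) (p u : 'rV[R]_M) a :
  dotv p (a *: u) = a * dotv p u.
Proof. by rewrite /dotv mulr_sumr; apply: eq_bigr => i _; rewrite mxE mulrCA. Qed.

Lemma dotv_sum (R : realFieldType) (M J : nat) (p : 'rV[R]_M) (f : 'I_J -> 'rV[R]_M) :
  dotv p (\sum_(j < J) f j) = \sum_(j < J) dotv p (f j).
Proof.
rewrite /dotv exchange_big /=; apply: eq_bigr => i _.
by rewrite summxE mulr_sumr.
Qed.

Theorem lemma4 (R : realFieldType) (M J : nat) (Y : 'I_J -> 'rV[R]_M -> Prop)
  (p ystar : 'rV[R]_M) (y : 'I_J -> 'rV[R]_M) :
  (forall j, is_cone (Y j)) ->
  (forall j, exists z, Y j z) ->
  supports (minkowski_sum Y) p ystar ->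
  (forall j, Y j (y j)) ->
  ystar = \sum_(j < J) y j ->
  forall ybar, conv_cone y ybar -> supports (minkowski_sum Y) p ybar.
Proof.
move=> cone _ [_ sup] Yy eys ybar [a [a0 ->]].
have key : forall j z, Y j z -> dotv p z <= dotv p (y j).
  move=> j z Yz.
  have := sup (\sum_(i < J) (if i == j then z else y i)).
  have H : minkowski_sum Y (\sum_(i < J) (if i == j then z else y i)).
    exists (fun i => if i == j then z else y i); split=> // i.
    by case: eqP => [->|].
  have E : \sum_(i < J | i != j) dotv p (if i == j then z else y i)
           = \sum_(i < J | i != j) dotv p (y i).
    by apply: eq_bigr => i /negbTE ->.
  move/(_ H); rewrite eys !dotv_sum (bigD1 j) //= [X in _ <= X -> _](bigD1 j) //= eqxx.
  by rewrite E lerD2r.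
have zero : forall j, dotv p (y j) = 0.
  move=> j; apply/eqP; rewrite eq_le; apply/andP; split.
    have := key j _ (cone j _ 2%:R (Yy j) (ler0n _ _)).
    by rewrite dotvZ mulr_natl mulr2n gerDl.
  have := key j _ (cone j _ 0 (Yy j) (lexx _)).
  by rewrite dotvZ mul0r.
have neg : forall w, minkowski_sum Y w -> dotv p w <= 0.
  move=> w [z [Yz ->]]; rewrite dotv_sum; apply: sumr_le0 => j _.
  by rewrite -(zero j); exact: key.
split.
  by exists (fun j => a j *: y j); split=> // j; exact: cone.
move=> w /neg; rewrite dotv_sum big1 // => j _.
by rewrite dotvZ zero mulr0.
Qed.
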